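(* Consider the FlexPD-C iterates described in the context with $\beta>0$, integer $T\ge1$ and $0<\alpha<1/\rho(B)$, and let $C=\sum_{t=0}^{T-1}(I-\alpha B)^t$, $M=C^{-1}(I-\alpha B)^T$, $N=\frac{1}{\alpha}(C^{-1}-M)$. Then for any $\eta_4>0$ and every $k\ge0$, \[\|x^{k+1}-x^*\|_{P_C}^2+\|x^{k+1}-x^k\|_{Q_C}^2\le\|x^k-x^*\|_M^2-\|x^{k+1}-x^*\|_M^2+\frac{\alpha}{\beta}\Big(\|\lambda^k-\lambda^*\|^2-\|\lambda^{k+1}-\lambda^*\|^2\Big),\] where $P_C=2\alpha mI-\alpha\eta_4I+2\alpha N-\alpha\beta A'A$ and $Q_C=M-\frac{\alpha L^2}{\eta_4}I$.
   Context: Setting: $n$ agents are connected by a connected undirected graph with edge set $\mathcal E$, $\epsilon=|\mathcal E|$. For $x\in\mathbb R^n$ let $f(x)=\sum_{i=1}^n f_i(x_i)$, where each $f_i:\mathbb R\to\mathbb R$ is twice differentiable with $m\le f_i''\le L$ for constants $0<m\le L$; $\nabla f(x)=(f_1'(x_1),\dots,f_n'(x_n))'$. $A\in\mathbb R^{\epsilon\times n}$ is the edge–node incidence matrix (null space spanned by the all-ones vector). $B\in\mathbb R^{n\times n}$ is symmetric positive semidefinite with the same null space as $A$, off-diagonal entries nonzero only on edges; $\rho(B)$ is its largest eigenvalue. $x^*$ is the unique minimizer of $f$ subject to $Ax=0$ and $\lambda^*$ a Lagrange multiplier with $\nabla f(x^* )+A'\lambda^*=0$, $Ax^*=0$, $Bx^*=0$,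 chosen in the column space of $A$. FlexPD-C: given $\alpha,\beta>0$, $T\ge1$, $x^0$ arbitrary, $\lambda^0=0$; for $k\ge0$: $x^{k+1,0}=x^k$; for $t=1,\dots,T$, $x^{k+1,t}=x^{k+1,t-1}-\alpha\nabla f(x^k)-\alpha A'\lambda^k-\alpha Bx^{k+1,t-1}$; then $x^{k+1}=x^{k+1,T}$, $\lambda^{k+1}=\lambda^k+\beta Ax^{k+1}$. Notation: $\|v\|_S^2:=v'Sv$ for any symmetric $S$; $\|\cdot\|$ Euclidean norm. *)

(* Defs.v *)
From HB Require Import structures.
From mathcomp Require Import all_boot all_order all_algebra.
From mathcomp Require Import all_classical all_reals all_analysis.
Set Implicit Arguments. Unset Strict Implicit. Unset Printing Implicit Defensive.
Import Order.TTheory GRing.Theory Num.Theory.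
Local Open Scope ring_scope.

Section Defs.
Variable R : realType.

(* Undirected graph on nodes 'I_n with edges 'I_eps; edge e joins
   src e and dst e (orientation is arbitrary, as for an incidence matrix). *)
Definition adj n eps (src dst : 'I_eps -> 'I_n) : rel 'I_n :=
  fun i j => [exists e, ((src e == i) && (dst e == j)) || ((src e == j) && (dst e == i))].

Definition simple_connected_graph n eps (src dst : 'I_eps -> 'I_n) : Prop :=
  (forall e, src e != dst e) /\
  (forall e e', (src e == src e' /\ dst e == dst e') \/ (src e == dst e' /\ dst e == src e') -> e = e') /\
  (forall i j, connect (adj src dst) i j).

Definition incidence n eps (src dst : 'I_eps -> 'I_n) : 'M[R]_(eps, n) :=
  \matrix_(e, i) ((i == src e)%:R - (i == dst e)%:R).

Definition sqnormS n (S : 'M[R]_n) (v : 'cV[R]_n) : R := (v^T *m S *m v) 0 0.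
Definition sqnorm k (v : 'cV[R]_k) : R := (v^T *m v) 0 0.

Definition is_largest_eigenvalue n (B : 'M[R]_n) (rho : R) : Prop :=
  (exists2 v : 'cV[R]_n, v != 0 & B *m v = rho *: v) /\
  (forall (a : R) (v : 'cV[R]_n), v != 0 -> B *m v = a *: v -> a <= rho).

Definition psd n (B : 'M[R]_n) : Prop := B^T = B /\ forall v : 'cV[R]_n, 0 <= sqnormS B v.

Definition gradf n (f : 'I_n -> R -> R) (x : 'cV[R]_n) : 'cV[R]_n :=
  \col_i (derive1 (f i) (x i 0)).

Definition fsum n (f : 'I_n -> R -> R) (x : 'cV[R]_n) : R := \sum_i f i (x i 0).

End Defs.

(* Main.v *)
Require Import Defs.
From HB Require Import structures.
From mathcomp Require Import all_boot all_order all_algebra.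
From mathcomp Require Import all_classical all_reals all_analysis.
Import Order.TTheory GRing.Theory Num.Theory.
From mathcomp Require Import ring lra.
Local Open Scope ring_scope.


Section H.

Variable R : realType.

Lemma mvt_lt (g : R -> R) (m L : R) : 0 <= m ->
  (forall x, derivable g x 1) -> (forall x, m <= derive1 g x <= L) ->
  forall p q, p < q -> m * (q - p) ^+ 2 <= (g q - g p) * (q - p) /\
                       (g q - g p) ^+ 2 <= L ^+ 2 * (q - p) ^+ 2.
Proof.
move=> m0 dg bg p q pq.
have [c _ Hc] : exists2 c, c \in `]p, q[%R & g q - g p = derive1 g c * (q - p).
  apply: MVT => //.
    by move=> z _; rewrite derive1E; apply: derivableP.
  by apply: derivable_within_continuous => z _; apply: dg.
rewrite Hc; have /andP[h1 h2] := bg c.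
have qp : 0 < q - p by rewrite subr_gt0.
split.
  have : 0 <= (derive1 g c - m) * (q - p) ^+ 2.
    by apply: mulr_ge0; [rewrite subr_ge0|exact: sqr_ge0].
  have E : (derive1 g c * (q - p)) * (q - p) = derive1 g c * (q - p) ^+ 2 by ring.
  rewrite E; lra.
have h3 : 0 <= derive1 g c by apply: le_trans h1.
rewrite exprMn; apply: ler_wpM2r; first exact: sqr_ge0.
have L0 : 0 <= L by apply: le_trans h3 h2.
by rewrite ler_sqr ?nnegrE.
Qed.

Lemma mvt_bounds (g : R -> R) (m L : R) : 0 <= m ->
  (forall x, derivable g x 1) -> (forall x, m <= derive1 g x <= L) ->
  forall p q, m * (q - p) ^+ 2 <= (g q - g p) * (q - p) /\
              (g q - g p) ^+ 2 <= L ^+ 2 * (q - p) ^+ 2.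
Proof.
move=> m0 dg bg p q; case: (ltgtP p q) => [pq|qp|->].
- exact: mvt_lt.
- have [h1 h2] := @mvt_lt g m L m0 dg bg _ _ qp.
  have e1 : (q - p) ^+ 2 = (p - q) ^+ 2 by ring.
  have e2 : (g q - g p) * (q - p) = (g p - g q) * (p - q) by ring.
  have e3 : (g q - g p) ^+ 2 = (g p - g q) ^+ 2 by ring.
  by rewrite e1 e2 e3.
- by rewrite !subrr expr0n /= !mulr0 ?mul0r.
Qed.

Lemma scal_ineq (g : R -> R) (m L eta a b c : R) :
  (forall p q, m * (q - p) ^+ 2 <= (g q - g p) * (q - p)) ->
  (forall p q, (g q - g p) ^+ 2 <= L ^+ 2 * (q - p) ^+ 2) -> 0 < eta ->
  (2 * m - eta) * (a - c) ^+ 2 - L ^+ 2 / eta * (a - b) ^+ 2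
    <= 2 * ((a - c) * (g b - g c)).
Proof.
move=> h1 h2 et.
have H1 := h1 c a.
have H2 := h2 a b.
set u := g b - g a in H2.
have sq : 0 <= (eta * (a - c) + u) ^+ 2 / eta.
  by apply: divr_ge0; [exact: sqr_ge0| exact: ltW].
have E : (eta * (a - c) + u) ^+ 2 / eta = eta * (a - c) ^+ 2 + 2 * (a - c) * u + u ^+ 2 / eta.
  by field; rewrite gt_eqF.
have H3 : u ^+ 2 / eta <= L ^+ 2 / eta * (a - b) ^+ 2.
  have -> : L ^+ 2 / eta * (a - b) ^+ 2 = (L ^+ 2 * (b - a) ^+ 2) / eta by ring.
  by apply: ler_wpM2r => //; rewrite invr_ge0 ltW.
have E2 : g b - g c = (g a - g c) + u by rewrite /u; ring.
rewrite E2; rewrite E in sq.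
have E3 : (a - c) ^+ 2 = (a - c) * (a - c) by ring.
nra.
Qed.
End H.

Section M.
Set Implicit Arguments. Unset Strict Implicit. Unset Printing Implicit Defensive.

Variable R : realFieldType.

Definition dotv n (u v : 'cV[R]_n) : R := (u^T *m v) 0 0.

Lemma dotvE n (u v : 'cV[R]_n) : dotv u v = \sum_i u i 0 * v i 0.
Proof. by rewrite /dotv mxE; apply: eq_bigr => i _; rewrite mxE. Qed.

Lemma dotvC n (u v : 'cV[R]_n) : dotv u v = dotv v u.
Proof. by rewrite !dotvE; apply: eq_bigr => i _; rewrite mulrC. Qed.

Lemma dotvDr n (u v w : 'cV[R]_n) : dotv u (v + w) = dotv u v + dotv u w.
Proof. by rewrite /dotv mulmxDr mxE. Qed.

Lemma dotvZr n (u v : 'cV[R]_n) a : dotv u (a *: v) = a * dotv u v.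
Proof. by rewrite /dotv -scalemxAr mxE. Qed.

Lemma dotvNr n (u v : 'cV[R]_n) : dotv u (- v) = - dotv u v.
Proof. by rewrite -scaleN1r dotvZr mulN1r. Qed.

Lemma dotvBr n (u v w : 'cV[R]_n) : dotv u (v - w) = dotv u v - dotv u w.
Proof. by rewrite dotvDr dotvNr. Qed.

Lemma dotvDl n (u v w : 'cV[R]_n) : dotv (v + w) u = dotv v u + dotv w u.
Proof. by rewrite dotvC dotvDr !(dotvC u). Qed.

Lemma dotvZl n (u v : 'cV[R]_n) a : dotv (a *: v) u = a * dotv v u.
Proof. by rewrite dotvC dotvZr dotvC. Qed.

Lemma dotvBl n (u v w : 'cV[R]_n) : dotv (v - w) u = dotv v u - dotv w u.
Proof. by rewrite dotvC dotvBr !(dotvC u). Qed.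

Lemma dotv0r n (u : 'cV[R]_n) : dotv u 0 = 0.
Proof. by rewrite /dotv mulmx0 mxE. Qed.

Lemma dotv_mul n p (u : 'cV[R]_n) (S : 'M[R]_(n, p)) v :
  dotv u (S *m v) = dotv (S^T *m u) v.
Proof. by rewrite /dotv trmx_mul trmxK mulmxA. Qed.

Lemma dotv_ge0 n (u : 'cV[R]_n) : 0 <= dotv u u.
Proof. by rewrite dotvE; apply: sumr_ge0 => i _; rewrite -expr2 sqr_ge0. Qed.

Lemma dotv_eq0 n (u : 'cV[R]_n) : dotv u u = 0 -> u = 0.
Proof.
rewrite dotvE => /psumr_eq0P H; apply/matrixP => i j.
have := H (fun i _ => ltac:(rewrite -expr2; exact: sqr_ge0)) i isT; rewrite -expr2 (ord1 j) mxE.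
by move/eqP; rewrite sqrf_eq0 => /eqP.
Qed.

Lemma pow_sym n (W : 'M[R]_n) : W^T = W -> forall k, (W ^+ k)^T = W ^+ k.
Proof.
move=> WT; elim=> [|k IH]; first by rewrite expr0 -idmxE trmx1.
by rewrite {1}exprS -mulmxE trmx_mul IH WT mulmxE -exprSr.
Qed.

Lemma unit_of_inj n (C : 'M[R]_n) :
  (forall v : 'cV[R]_n, C *m v = 0 -> v = 0) -> C \in unitmx.
Proof.
move=> Hinj; rewrite -unitmx_tr -row_free_unit -kermx_eq0; apply/eqP.
apply/row_matrixP => i; rewrite row0.
have /sub_kermxP H : (row i (kermx C^T) <= kermx C^T)%MS by exact: row_sub.
have : C *m (row i (kermx C^T))^T = 0.
  by have := congr1 trmx H; rewrite trmx_mul trmxK trmx0.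
by move/Hinj => /(congr1 trmx); rewrite trmxK trmx0.
Qed.

Lemma C_inj n (B : 'M[R]_n) (rho alpha : R) (T : nat) :
  B^T = B ->
  (forall (a : R) (v : 'cV[R]_n), v != 0 -> B *m v = a *: v -> a <= rho) ->
  0 < alpha -> alpha * rho < 1 -> (1 <= T)%N ->
  forall v : 'cV[R]_n,
    (\sum_(t < T) (1%:M - alpha *: B) ^+ t) *m v = 0 -> v = 0.
Proof.
move=> BT Hrho a0 arho T1 v Cv.
set W := 1%:M - alpha *: B.
have WT : W^T = W by rewrite /W linearB /= linearZ /= trmx1 BT.
set C := \sum_(t < T) W ^+ t in Cv.
have WTv : W ^+ T *m v = v.
  have : (W ^+ T - 1) *m v = 0.
    by rewrite subrX1 -mulmxE -mulmxA Cv mulmx0.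
  by rewrite mulmxBl -idmxE mul1mx => /eqP; rewrite subr_eq0 => /eqP.
set P := W * W.
have PTv : P ^+ T *m v = v.
  by rewrite /P exprMn_comm // -mulmxE -mulmxA !WTv.
set y := (P - 1) *m v.
set Q := \sum_(j < T) P ^+ j.
have Qy : Q *m y = 0.
  have cQ : GRing.comm Q (P - 1).
    apply: commr_sym; apply: commr_sum => j _; apply: commr_sym.
    apply: commrB; first exact/commr_sym/commrX.
    exact: commr1.
  have E : Q *m (P - 1) = P ^+ T - 1 by rewrite mulmxE cQ /Q -subrX1.
  by rewrite /y mulmxA E mulmxBl PTv -idmxE mul1mx subrr.
have y0 : y = 0.
  apply: dotv_eq0; apply/eqP; rewrite eq_le dotv_ge0 andbT.
  have : dotv y (Q *m y) = 0 by rewrite Qy dotv0r.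
  rewrite /Q mulmx_suml /dotv mulmx_sumr summxE => <-.
  case: T T1 {C Cv WTv PTv Qy Q} => [//|T'] _.
  rewrite big_ord_recl expr0 -idmxE mul1mx lerDl.
  apply: sumr_ge0 => j _.
  rewrite /P exprMn_comm // -mulmxE -mulmxA -/(dotv _ _) dotv_mul pow_sym //.
  exact: dotv_ge0.
have WWv : W *m (W *m v) = v.
  by move: y0; rewrite /y mulmxBl -idmxE mul1mx mulmxA => /eqP; rewrite subr_eq0 => /eqP.
set u := W *m v - v.
have Wu : W *m u = - u by rewrite /u mulmxBr WWv opprB.
have u0 : u = 0.
  apply/eqP; apply/negP => /negP unz.
  have Bu : B *m u = (2 / alpha) *: u.
    have : alpha *: (B *m u) = 2%:R *: u.
      have -> : alpha *: (B *m u) = u - W *m u.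
        by rewrite /W mulmxBl mul1mx scalemxAl opprB addrC subrK.
      by rewrite Wu opprK scaler_nat mulr2n.
    move=> /(congr1 (fun z => alpha^-1 *: z)); rewrite !scalerA mulVf ?gt_eqF //.
    by rewrite scale1r mulrC.
  have := Hrho _ _ unz Bu.
  rewrite ler_pdivrMr // => H.
  have : (2 : R) <= 1 by apply: (le_trans H); rewrite mulrC; exact: ltW.
  move=> h; have : (1 : R) < 2 by rewrite ltr1n.
  by rewrite ltNge h.
have Wv : W *m v = v by apply/eqP; rewrite -subr_eq0 -/u u0.
have Wtv : forall t, W ^+ t *m v = v.
  elim=> [|t IH]; first by rewrite expr0 -idmxE mul1mx.
  by rewrite exprSr -mulmxE -mulmxA Wv IH.
move: Cv; rewrite /C mulmx_suml.
under eq_bigr do rewrite Wtv.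
rewrite sumr_const card_ord -scaler_nat => /eqP.
rewrite scaler_eq0 pnatr_eq0 => /orP[/eqP T0|/eqP //].
by rewrite T0 in T1.
Qed.

End M.

Section Alg.
Set Implicit Arguments. Unset Strict Implicit.
Variable R : realFieldType.

Lemma lin_step n (a b gr Al Ba Bb : 'cV[R]_n) (alpha : R) :
  a - alpha *: b - alpha *: gr - alpha *: Al - alpha *: (Ba - alpha *: Bb)
  = (a - alpha *: Ba) - alpha *: (gr + Al + (b - alpha *: Bb)).
Proof. by apply/matrixP => i j; rewrite !mxE; ring. Qed.

Lemma key_alg n (p q r s g gr Al gs Als : 'cV[R]_n) (alpha : R) :
  p = r - alpha *: g -> g = gr + Al -> gs + Als = 0 ->
  (p - s) - (q - s) + (q - r) = - (alpha *: (gr - gs)) - alpha *: (Al - Als).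
Proof.
move=> -> -> H; have -> : gs = - Als by apply/eqP; rewrite -addr_eq0 H.
by apply/matrixP => i j; rewrite !mxE; ring.
Qed.

End Alg.

Section Real.
Variable R : realType.

Lemma sqnormSE n (S : 'M[R]_n) v : sqnormS S v = dotv v (S *m v).
Proof. by rewrite /sqnormS /dotv mulmxA. Qed.

Lemma sqnormE n (v : 'cV[R]_n) : sqnorm v = dotv v v.
Proof. by []. Qed.

End Real.

Theorem lemma3p16 (R : realType) (n eps : nat)
  (src dst : 'I_eps -> 'I_n)
  (Hgraph : simple_connected_graph src dst)
  (f : 'I_n -> R -> R) (m L : R)
  (Hm : 0 < m) (HmL : m <= L)
  (Hdiff1 : forall i x, derivable (f i) x 1)
  (Hdiff2 : forall i x, derivable (derive1 (f i)) x 1)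
  (Hbnd : forall i x, m <= derive1 (derive1 (f i)) x <= L)
  (B : 'M[R]_n) (rho : R)
  (HBpsd : psd B)
  (HBker : forall v : 'cV[R]_n, B *m v = 0 <-> incidence R src dst *m v = 0)
  (HBedge : forall i j, i != j -> B i j != 0 -> adj src dst i j)
  (Hrho : is_largest_eigenvalue B rho)
  (xs : 'cV[R]_n) (lams : 'cV[R]_eps)
  (Hxs_feas : incidence R src dst *m xs = 0)
  (Hxs_min : forall x : 'cV[R]_n, incidence R src dst *m x = 0 -> fsum f xs <= fsum f x)
  (Hkkt : gradf f xs + (incidence R src dst)^T *m lams = 0)
  (HBxs : B *m xs = 0)
  (Hlams_range : exists y : 'cV[R]_n, lams = incidence R src dst *m y)
  (alpha beta : R) (T : nat)
  (Halpha : 0 < alpha) (Halpha_rho : alpha * rho < 1)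
  (Hbeta : 0 < beta) (HT : (1 <= T)%N)
  (x : nat -> 'cV[R]_n) (lam : nat -> 'cV[R]_eps)
  (xin : nat -> nat -> 'cV[R]_n)
  (Hlam0 : lam 0%N = 0)
  (Hxin0 : forall k, xin k.+1 0%N = x k)
  (HxinS : forall k t, (t < T)%N ->
     xin k.+1 t.+1 = xin k.+1 t - alpha *: gradf f (x k)
                     - alpha *: ((incidence R src dst)^T *m lam k)
                     - alpha *: (B *m xin k.+1 t))
  (Hx : forall k, x k.+1 = xin k.+1 T)
  (Hlam : forall k, lam k.+1 = lam k + beta *: (incidence R src dst *m x k.+1)) :
  let A := incidence R src dst in
  let C := \sum_(t < T) (1%:M - alpha *: B) ^+ t in
  let M := invmx C *m (1%:M - alpha *: B) ^+ T in
  let N := alpha^-1 *: (invmx C - M) in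
  forall (eta4 : R), 0 < eta4 -> forall k : nat,
  let PC := (2 * alpha * m - alpha * eta4)%:M + (2 * alpha) *: N - (alpha * beta) *: (A^T *m A) in
  let QC := M - (alpha * L ^+ 2 / eta4)%:M in
  sqnormS PC (x k.+1 - xs) + sqnormS QC (x k.+1 - x k)
  <= sqnormS M (x k - xs) - sqnormS M (x k.+1 - xs)
     + alpha / beta * (sqnorm (lam k - lams) - sqnorm (lam k.+1 - lams)).

Proof.
move=> A C M N eta4 eta0 k; cbv zeta.
have BT : B^T = B by case: HBpsd.
have [_ Hrho2] := Hrho.
have Cinj := C_inj BT Hrho2 Halpha Halpha_rho HT.
have Cunit : C \in unitmx by apply: unit_of_inj; exact: Cinj.
pose W := 1%:M - alpha *: B.
pose g := gradf f (x k) + A^T *m lam k.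
have It : forall t, (t <= T)%N -> xin k.+1 t =
    W ^+ t *m x k - alpha *: ((\sum_(s < t) W ^+ s) *m g).
  move=> t; elim: t => [|t IH] Ht.
    by rewrite Hxin0 expr0 -idmxE big_ord0 mul1mx mul0mx scaler0 subr0.
  rewrite HxinS // IH; last exact: ltnW.
  rewrite big_ord_recl expr0 -idmxE mulmxDl mul1mx.
  have -> : \sum_(i < t) W ^+ (lift ord0 i) = W *m \sum_(i < t) W ^+ i.
    by rewrite mulmxE mulr_sumr; apply: eq_bigr => i _; rewrite lift0 exprS.
  rewrite exprS -mulmxE -!mulmxA.
  set a := W ^+ t *m x k.
  set b := (\sum_(i < t) W ^+ i) *m g.
  rewrite mulmxBr -scalemxAr.
  rewrite /W [(1%:M - _) *m a]mulmxBl [(1%:M - _) *m b]mulmxBl !mul1mx -!scalemxAl.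
  rewrite /g; exact: lin_step.
have x1 : x k.+1 = W ^+ T *m x k - alpha *: (C *m g) by rewrite Hx It.
have Wxs : W *m xs = xs by rewrite /W mulmxBl mul1mx -scalemxAl HBxs scaler0 subr0.
have Wtxs : forall t, W ^+ t *m xs = xs.
  elim=> [|t IH]; first by rewrite expr0 -idmxE mul1mx.
  by rewrite exprSr -mulmxE -mulmxA Wxs IH.
have Mxs : M *m xs = invmx C *m xs by rewrite /M -mulmxA Wtxs.
have p1 : invmx C *m x k.+1 = M *m x k - alpha *: g.
  by rewrite x1 mulmxBr mulmxA -scalemxAr mulmxA mulVmx // mul1mx.
set e := x k.+1 - xs.
set d := x k.+1 - x k.
have key : alpha *: (N *m e) + M *m d =
    - (alpha *: (gradf f (x k) - gradf f xs)) - alpha *: (A^T *m (lam k - lams)).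
  have aN : alpha *: (N *m e) = (invmx C - M) *m e.
    by rewrite /N -scalemxAl scalerA mulfV ?gt_eqF // scale1r.
  rewrite aN /e /d mulmxBl !mulmxBr Mxs.
  have gE : g = gradf f (x k) + A^T *m lam k by [].
  exact: (@key_alg _ _ _ _ _ _ _ _ _ _ _ _ p1 gE Hkkt).
have WT : W^T = W by rewrite /W linearB /= linearZ /= trmx1 BT.
have CT : C^T = C.
  rewrite /C raddf_sum; apply: eq_bigr => i _; exact: pow_sym.
have cW : C *m W ^+ T = W ^+ T *m C.
  rewrite mulmxE; apply/commr_sym/commr_sum => i _.
  by apply: commrX; apply/commr_sym; apply: commrX.
have Msym : M^T = M.
  rewrite /M trmx_mul trmx_inv CT pow_sym //.
  have E : W ^+ T *m invmx C = invmx C *m (C *m W ^+ T) *m invmx C.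
    by rewrite (mulmxA (invmx C) C) mulVmx // mul1mx.
  by rewrite E cW -!mulmxA mulmxV // mulmx1.
have Ae : A *m e = A *m x k.+1 by rewrite /e mulmxBr Hxs_feas subr0.
have lam1 : lam k.+1 - lams = (lam k - lams) + beta *: (A *m e).
  by rewrite Ae Hlam; apply/matrixP => i j; rewrite !mxE; ring.
have xke : x k - xs = e - d.
  by rewrite /e /d; apply/matrixP => i j; rewrite !mxE; ring.
have grad : (2 * m - eta4) * dotv e e - L ^+ 2 / eta4 * dotv d d
            <= 2 * dotv e (gradf f (x k) - gradf f xs).
  rewrite !dotvE !mulr_sumr -sumrB; apply: ler_sum => i _.
  have B1 := fun p q => (@mvt_bounds _ _ m L (ltW Hm) (Hdiff2 i) (Hbnd i) p q).1.
  have B2 := fun p q => (@mvt_bounds _ _ m L (ltW Hm) (Hdiff2 i) (Hbnd i) p q).2.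
  have := @scal_ineq _ _ m L eta4 (x k.+1 i 0) (x k i 0) (xs i 0) B1 B2 eta0.
  by rewrite /e /d /gradf !mxE !expr2.
have AtA : dotv e (A^T *m (A *m e)) = dotv (A *m e) (A *m e) by rewrite dotv_mul trmxK.
have H1 : sqnormS ((2 * alpha * m - alpha * eta4)%:M + (2 * alpha) *: N -
     (alpha * beta) *: (A^T *m A)) e
   = (2 * alpha * m - alpha * eta4) * dotv e e + 2 * alpha * dotv e (N *m e)
     - alpha * beta * dotv (A *m e) (A *m e).
  rewrite sqnormSE mulmxBl mulmxDl mul_scalar_mx -!scalemxAl -mulmxA.
  by rewrite dotvBr dotvDr !dotvZr AtA mulrA.
have H2 : sqnormS (M - (alpha * L ^+ 2 / eta4)%:M) d
   = dotv d (M *m d) - alpha * L ^+ 2 / eta4 * dotv d d.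
  by rewrite sqnormSE mulmxBl mul_scalar_mx dotvBr dotvZr.
have Md : dotv d (M *m e) = dotv e (M *m d) by rewrite dotv_mul Msym dotvC.
have H3 : sqnormS M (x k - xs)
   = dotv e (M *m e) - 2 * dotv e (M *m d) + dotv d (M *m d).
  rewrite sqnormSE xke mulmxBr dotvBl !dotvBr Md.
  set X := dotv e (M *m e); set Y := dotv e (M *m d); set Z := dotv d (M *m d).
  clearbody X Y Z. move: X Y Z => X Y Z. lra.
have H4 : sqnormS M e = dotv e (M *m e) by rewrite sqnormSE.
have Hl : sqnorm (lam k.+1 - lams) = sqnorm (lam k - lams)
     + 2 * beta * dotv (A *m e) (lam k - lams) + beta ^+ 2 * dotv (A *m e) (A *m e).
  rewrite !sqnormE lam1; set l := lam k - lams; set a := A *m e; clearbody l a.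
  rewrite dotvDl !dotvDr !dotvZl !dotvZr (dotvC l a).
  set X := dotv l l; set Y := dotv a l; set Z := dotv a a; clearbody X Y Z.
  move: X Y Z => X Y Z. lra.
have Hab : alpha / beta * (sqnorm (lam k - lams) - sqnorm (lam k.+1 - lams))
   = - (2 * alpha * dotv (A *m e) (lam k - lams)) - alpha * beta * dotv (A *m e) (A *m e).
  by rewrite Hl; field; rewrite gt_eqF.
have k2 := congr1 (dotv e) key.
rewrite dotvDr dotvZr dotvBr dotvNr !dotvZr [dotv e (A^T *m _)]dotv_mul trmxK in k2.
rewrite H1 H2 H3 H4 Hab.
have G := ler_wpM2l (ltW Halpha) grad.
move: k2 G.
set X1 := dotv e e; set X2 := dotv e (N *m e); set X3 := dotv (A *m e) (A *m e).
set X4 := dotv d (M *m d); set X5 := dotv d d; set X6 := dotv e (M *m e).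
set X7 := dotv e (M *m d); set X8 := dotv (A *m e) (lam k - lams).
set X9 := dotv e (gradf f (x k) - gradf f xs).
clearbody X1 X2 X3 X4 X5 X6 X7 X8 X9.
move: X1 X2 X3 X4 X5 X6 X7 X8 X9 => X1 X2 X3 X4 X5 X6 X7 X8 X9 k2 G.
lra.
Qed.
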